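(* Let $b\ge2$ and $s\ge1$ be integers, and let $M_s(b)$ be the number of tuples $(d_1,\dots,d_s)\in\mathbb N^s$ with $d_1\ge d_2\ge\cdots\ge d_s\ge1$, $d_1\ge2$ and $d_1\cdots d_s=b$. Then $M_s(b)\le b^{\log_2\log_2 b}$. *)

(* Defs.v *)
From mathcomp Require Import all_boot.
From Stdlib Require Import Reals.

Set Implicit Arguments.
Unset Strict Implicit.
Unset Printing Implicit Defensive.

(* A candidate tuple (d_1,...,d_s) is encoded as d : {ffun 'I_s -> 'I_b.+1},
   i.e. entries in {0,...,b}; index i : 'I_s stands for d_{i+1}.
   Entries of a tuple with all d_i >= 1 and product b are automatically <= b,
   so this bound loses nothing. *)
Definition is_Mtuple (s b : nat) (d : {ffun 'I_s -> 'I_b.+1}) : bool :=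
  [&& [forall i : 'I_s, forall j : 'I_s, (i <= j)%N ==> (d j <= d i)%N],
      [forall i : 'I_s, (1 <= d i)%N],
      [forall i : 'I_s, (nat_of_ord i == 0)%N ==> (2 <= d i)%N] &
      (\prod_(i < s) (d i : nat) == b)%N].

Definition M (s b : nat) : nat := #|[pred d : {ffun 'I_s -> 'I_b.+1} | is_Mtuple d]|.

Definition log2 (x : R) : R := (ln x / ln 2)%R.

(* Main.v *)
Require Import Defs.
From Stdlib Require Import Reals Lra.
From mathcomp Require Import all_boot zify.

Definition rr (b m : nat) := #|[pred x : 'I_b.+1 | (1 <= x) && (x ^ m <= b)]|.

Lemma rr_pow b m : 0 < m -> rr b m ^ m <= b.
Proof.
move=> m0; rewrite leqNgt; apply/negP => H.
set S := [pred x : 'I_b.+1 | (1 <= x) && (x ^ m <= b)].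
have Hsz : size [seq val x | x <- enum S] = rr b m by rewrite size_map -cardE.
have Hu : uniq [seq val x | x <- enum S] by rewrite map_inj_uniq ?enum_uniq //; exact: val_inj.
have := uniq_leq_size Hu (s2 := iota 1 (rr b m).-1).
rewrite size_iota Hsz.
have rpos : 0 < rr b m.
  case: (posnP (rr b m)) => [E|//]; move: H; rewrite E; case: (m) m0 => // m1 _; by rewrite expnS mul0n ltn0.
suff : {subset [seq val x | x <- enum S] <= iota 1 (rr b m).-1}.
  by move=> hs hA; have := hA hs; lia.
move=> y /mapP [x]; rewrite mem_enum /S inE => /andP [x1 xb] ->.
rewrite mem_iota.
have : x < rr b m by rewrite -(ltn_exp2r _ _ m0); exact: leq_ltn_trans xb H.
have -> : val x = nat_of_ord x by []. lia.
Qed.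

Lemma rr_le1 b m : 0 < m -> b < 2 ^ m -> rr b m <= 1.
Proof.
move=> m0 H.
set S := [pred x : 'I_b.+1 | (1 <= x) && (x ^ m <= b)].
have Hsz : size [seq val x | x <- enum S] = rr b m by rewrite size_map -cardE.
have Hu : uniq [seq val x | x <- enum S] by rewrite map_inj_uniq ?enum_uniq //; exact: val_inj.
rewrite -Hsz; have := @uniq_leq_size _ _ [:: 1] Hu; apply.
move=> y /mapP [x]; rewrite mem_enum /S inE => /andP [x1 xb] ->.
have : x < 2 by rewrite -(ltn_exp2r _ _ m0); exact: leq_ltn_trans xb H.
rewrite inE; have -> : val x = nat_of_ord x by []; move: x1; lia.
Qed.

Lemma rr_mono b m i : 0 < m -> m <= i -> rr b i <= rr b m.
Proof.
move=> m0 mi; apply: subset_leq_card; apply/subsetP => x; rewrite !inE => /andP [x1 xb].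
rewrite x1 /=; apply: leq_trans xb; exact: leq_pexp2l.
Qed.

Lemma rr_pos b m : 0 < b -> 0 < rr b m.
Proof.
move=> b0; apply/card_gt0P; exists (inord 1); rewrite inE inordK; last by lia.
by rewrite exp1n.
Qed.

Lemma prod_rr b t : 0 < b -> forall m n, 0 < m -> b < 2 ^ (m * 2 ^ t) ->
  \prod_(m <= i < n) rr b i <= b ^ t.
Proof.
move=> b0; elim: t => [|t IH] m n m0 H.
  rewrite muln1 in H; rewrite expn0.
  apply: (@leq_trans (\prod_(m <= i < n) 1)); last by rewrite big1_eq.
  rewrite big_seq_cond [X in _ <= X]big_seq_cond.
  apply: leq_prod => i /andP [].
  rewrite mem_index_iota => /andP [mi _] _.
  apply: rr_le1; first by lia.
  apply: (leq_trans H); apply: leq_pexp2l => //.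
have Hm := @rr_pow b m m0.
case: (leqP n (2 * m)) => hn.
  apply: (@leq_trans (\prod_(m <= i < n) rr b m)).
    rewrite big_seq_cond [X in _ <= X]big_seq_cond.
    apply: leq_prod => i /andP []; rewrite mem_index_iota => /andP [mi _] _.
    exact: rr_mono.
  rewrite prod_nat_const_nat.
  apply: (@leq_trans (rr b m ^ m)).
    case: (leqP n m) => nm.
      have -> : n - m = 0 by lia.
      by rewrite expn0 expn_gt0 rr_pos.
    by apply: leq_pexp2l; [exact: rr_pos| lia].
  apply: (leq_trans Hm); rewrite expnS; apply: leq_pmulr; by rewrite expn_gt0 b0.
rewrite (big_cat_nat _ (n := 2 * m)) /=; [|lia|lia].
rewrite expnS; apply: leq_mul.
  apply: (@leq_trans (\prod_(m <= i < 2 * m) rr b m)).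
    rewrite big_seq_cond [X in _ <= X]big_seq_cond.
    apply: leq_prod => i /andP []; rewrite mem_index_iota => /andP [mi _] _.
    exact: rr_mono.
  rewrite prod_nat_const_nat; have -> : 2 * m - m = m by lia.
  exact: Hm.
apply: IH; first by lia.
by move: H; rewrite expnS mulnCA mulnA.
Qed.

Lemma M_le s b : 0 < b -> M s.+1 b <= \prod_(2 <= i < s.+2) rr b i.
Proof.
move=> b0.
pose phi (d : {ffun 'I_s.+1 -> 'I_b.+1}) : {ffun 'I_s.+1 -> 'I_b.+1} :=
  [ffun i => if val i == 0 then ord0 else d i].
pose F (i : 'I_s.+1) : pred 'I_b.+1 :=
  if val i == 0 then pred1 ord0 else [pred x : 'I_b.+1 | (1 <= x) && (x ^ i.+1 <= b)].
have inj : {in [pred d | is_Mtuple d] &, injective phi}.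
  move=> d e; rewrite !inE => /and4P [_ _ _ pd] /and4P [_ _ _ pe] E.
  apply/ffunP => i.
  have Hr : forall j : 'I_s, d (lift ord0 j) = e (lift ord0 j).
    by move=> j; move: E => /ffunP /(_ (lift ord0 j)); rewrite /phi !ffunE /=.
  case: (unliftP ord0 i) => [j ->|->]; first exact: Hr.
  move: pd pe; rewrite !big_ord_recl.
  have -> : \prod_(i < s) (e (lift ord0 i) : nat) = \prod_(i < s) (d (lift ord0 i) : nat).
    by apply: eq_bigr => j _; rewrite Hr.
  move=> /eqP pd /eqP pe; apply: val_inj => /=.
  have P0 : 0 < \prod_(i < s) (d (lift ord0 i) : nat).
    case: (posnP (\prod_(i < s) (d (lift ord0 i) : nat))) => // z.
    by move: pd; rewrite z muln0 => E0; move: b0; rewrite -E0.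
  by apply/eqP; rewrite -(eqn_pmul2r P0) pd pe.
rewrite /M -(card_in_imset inj).
apply: (@leq_trans #|family F|).
  apply: subset_leq_card; apply/subsetP => f /imsetP [d Hd ->]; rewrite inE in Hd.
  apply/familyP => i; rewrite /phi ffunE /F.
  case: ifP => i0; first by rewrite inE.
  move: Hd => /and4P [/forallP Hmono /forallP Hpos _ /eqP Hprod].
  rewrite inE Hpos /=.
  apply: (@leq_trans (\prod_(j < s.+1) (d j : nat))); last by rewrite Hprod.
  apply: (@leq_trans (\prod_(j < s.+1 | j < i.+1) (d i : nat))).
    rewrite -(@big_ord_widen _ 1 muln i.+1 s.+1 (fun _ => (d i : nat)) (ltn_ord i)).
    by rewrite prod_nat_const card_ord.
  apply: (@leq_trans (\prod_(j < s.+1 | j < i.+1) (d j : nat))).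
    apply: leq_prod => j ji.
    by have := Hmono j; move=> /forallP /(_ i) /implyP; apply; rewrite -ltnS.
  rewrite [X in _ <= X](bigID (fun j : 'I_s.+1 => j < i.+1)) /=.
  apply: leq_pmulr.
  rewrite prodn_gt0 // => j; exact: Hpos.
rewrite card_family foldrE big_map big_enum /=.
rewrite big_ord_recl /F /= card1 mul1n.
rewrite -{1}[2]/(0 + 2) big_addn big_mkord.
have -> : s.+2 - 2 = s by lia.
apply: leq_prod => i _.
by rewrite /rr /bump /= addn2.
Qed.
From Stdlib Require Import Reals.

Lemma ln_le' (x y : R) : (0 < x)%R -> (x <= y)%R -> (ln x <= ln y)%R.
Proof.
move=> hx hxy; case: (Rle_lt_or_eq_dec _ _ hxy) => h.
  by apply: Rlt_le; apply: ln_increasing.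
by rewrite h; apply: Rle_refl.
Qed.

Lemma expn_pow a n : expn a n = Nat.pow a n.
Proof. elim: n => // n IH; by rewrite expnS IH. Qed.

Lemma exT b : 2 <= b -> exists T, expn 2 (expn 2 T) <= b < expn 2 (expn 2 T.+1).
Proof.
move=> hb.
suff : forall n, b < expn 2 (expn 2 n.+1) -> exists T, expn 2 (expn 2 T) <= b < expn 2 (expn 2 T.+1).
  move=> /(_ b); apply; apply: (@leq_trans (expn 2 b)); first exact: ltn_expl.
  apply: leq_pexp2l => //; apply: ltnW; exact: (leq_ltn_trans (leqnSn b) (ltn_expl _ _)).
elim=> [|n IH] H; first by exists 0; rewrite expn0 expn1 hb.
case: (ltnP b (expn 2 (expn 2 n.+1))) => h; first exact: IH.
by exists n.+1; rewrite h.
Qed.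

Lemma log2_bound (b T : nat) : expn 2 (expn 2 T) <= b ->
  (INR T <= log2 (log2 (INR b)))%R.
Proof.
move=> h.
have l2 : (0 < ln 2)%R by have := ln_lt_2; lra.
have e2 : INR 2 = 2%R by rewrite /=; lra.
have hb : (INR (Nat.pow 2 (Nat.pow 2 T)) <= INR b)%R by apply: le_INR; apply/leP; rewrite -!expn_pow.
rewrite pow_INR in hb.
have p0 : (0 < INR 2 ^ (Nat.pow 2 T))%R by apply: pow_lt; rewrite /=; lra.
have h1 := ln_le' _ _ p0 hb.
rewrite ln_pow e2 in h1; last lra.
have h2 : (INR (Nat.pow 2 T) <= log2 (INR b))%R.
  rewrite /log2; apply: (Rmult_le_reg_r (ln 2)) => //.
  rewrite /Rdiv Rmult_assoc Rinv_l; last lra.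
  by rewrite Rmult_1_r.
rewrite pow_INR in h2.
have p1 : (0 < INR 2 ^ T)%R by apply: pow_lt; rewrite /=; lra.
have h3 := ln_le' _ _ p1 h2.
rewrite ln_pow e2 in h3; last lra.
rewrite /log2; apply: (Rmult_le_reg_r (ln 2)) => //.
rewrite /Rdiv Rmult_assoc Rinv_l; last lra.
by rewrite Rmult_1_r.
Qed.

Theorem lemma5p4 (b s : nat) (hb : (2 <= b)%N) (hs : (1 <= s)%N) :
  (INR (M s b) <= Rpower (INR b) (log2 (log2 (INR b))))%R.
Proof.
have [T /andP [hT1 hT2]] := @exT b hb.
case: s hs => // s _.
have hM : M s.+1 b <= expn b T.
  apply: (leq_trans (@M_le s b _)); first lia.
  apply: prod_rr; [lia|lia|].
  by rewrite -expnS.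
have bpos : (0 < INR b)%R by apply: lt_0_INR; apply/ltP; lia.
apply: (Rle_trans _ (Rpower (INR b) (INR T))).
  rewrite Rpower_pow // -pow_INR -expn_pow; apply: le_INR; exact/leP.
apply: Rle_Rpower; last exact: log2_bound.
have : (INR 1 <= INR b)%R by apply: le_INR; apply/leP; lia.
by rewrite /=.
Qed.
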